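(* Let $n\ge 1$ and consider the discrete-time system $$x(k+1)=A_0x(k)+B_0u(k)+E_0f(k),\qquad y(k)=C_0x(k),$$ with $A_0\in\mathbb{R}^{n\times n}$, $B_0,E_0\in\mathbb{R}^{n\times1}$, $C_0\in\mathbb{R}^{1\times n}$, known scalar input $u$, unknown scalar disturbance $f$ and scalar output $y$. Let $X(k)=[x(k)^T,f(k)]^T$, $A=\begin{bmatrix}A_0&E_0\\0_{1\times n}&1\end{bmatrix}$, $B=\begin{bmatrix}B_0\\0\end{bmatrix}$, $C=[C_0,\ 0]$, and for a gain $L\in\mathbb{R}^{n+1}$ consider the observer $$\hat X(k+1)=A\hat X(k)+Bu(k)+L\big(y(k)-C\hat X(k)\big),$$ where $\hat X(k)=[\hat x(k)^T,\hat f(k)]^T$. Then the property $$\hat f(k)=f(k-n-1)\quad\text{for all }k>n+1$$ (for all input sequences $u$, disturbance sequences $f$, and initial conditions $x(0)$, $\hat X(0)$) holds if and only if (a) $(A_0,C_0)$ is observable and $(A_0,E_0,C_0)$ has no invariant zeros, i.e. $\operatorname{rank}\begin{bmatrix} A_0-zI_n & E_0\\ C_0 & 0\end{bmatrix}=n+1$ for all $z\in\mathbb{C}$, and (b) all eigenvalues of $A-LC$ are equal to $0$.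
   Context: The observer is called the general model-based extended state observer (GMB-ESO); the last component $\hat f$ of $\hat X$ is the estimate of the total disturbance $f$. The eigenvalues of $A-LC$ are called the observer eigenvalues. *)

(* Defs.v *)
From HB Require Import structures.
From mathcomp Require Import all_boot all_order all_algebra.
From mathcomp Require Import reals.
From mathcomp.real_closed Require Import complex.
Set Implicit Arguments. Unset Strict Implicit. Unset Printing Implicit Defensive.
Import Order.TTheory GRing.Theory Num.Theory.
Local Open Scope ring_scope.

Section GMBESO.
Variables (R : realType) (n : nat).

Definition cmx m p (M : 'M[R]_(m, p)) : 'M[complex R]_(m, p) :=
  map_mx (fun a => (a%:C)%C) M.

Definition obsv_mx (A0 : 'M[R]_n) (C0 : 'rV[R]_n) : 'M[R]_n :=
  \matrix_(i < n) (C0 *m A0 ^+ i).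
Definition observable (A0 : 'M[R]_n) (C0 : 'rV[R]_n) : Prop :=
  \rank (obsv_mx A0 C0) = n.

Definition rosenbrock (A0 : 'M[R]_n) (E0 : 'cV[R]_n) (C0 : 'rV[R]_n)
  (z : complex R) : 'M[complex R]_(n + 1) :=
  block_mx (cmx A0 - z%:M) (cmx E0) (cmx C0) (0 : 'M_1).
Definition no_invariant_zeros A0 E0 C0 : Prop :=
  forall z : complex R, \rank (rosenbrock A0 E0 C0 z) = (n + 1)%N.

Definition augA (A0 : 'M[R]_n) (E0 : 'cV[R]_n) : 'M[R]_(n + 1) :=
  block_mx A0 E0 0 (1 : 'M_1).
Definition augB (B0 : 'cV[R]_n) : 'cV[R]_(n + 1) := col_mx B0 0.
Definition augC (C0 : 'rV[R]_n) : 'rV[R]_(n + 1) := row_mx C0 0.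

Fixpoint xtraj (A0 : 'M[R]_n) (B0 E0 : 'cV[R]_n) (u f : nat -> R)
    (x0 : 'cV[R]_n) (k : nat) : 'cV[R]_n :=
  match k with
  | 0 => x0
  | k'.+1 => A0 *m xtraj A0 B0 E0 u f x0 k' + u k' *: B0 + f k' *: E0
  end.

Fixpoint obs_traj (A0 : 'M[R]_n) (B0 E0 : 'cV[R]_n) (C0 : 'rV[R]_n)
    (L : 'cV[R]_(n + 1)) (u f : nat -> R) (x0 : 'cV[R]_n)
    (Xh0 : 'cV[R]_(n + 1)) (k : nat) : 'cV[R]_(n + 1) :=
  match k with
  | 0 => Xh0
  | k'.+1 =>
      let Xh := obs_traj A0 B0 E0 C0 L u f x0 Xh0 k' in
      augA A0 E0 *m Xh + u k' *: augB B0
      + L *m (C0 *m xtraj A0 B0 E0 u f x0 k' - augC C0 *m Xh)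
  end.

Definition fhat A0 B0 E0 C0 L u f x0 Xh0 (k : nat) : R :=
  obs_traj A0 B0 E0 C0 L u f x0 Xh0 k (rshift n (ord0 : 'I_1)) 0.

End GMBESO.

(* Main.v *)
Require Import Defs.
From HB Require Import structures.
From mathcomp Require Import all_boot all_order all_algebra.
From mathcomp Require Import reals.
From mathcomp.real_closed Require Import complex.
From mathcomp Require Import zify ring.
Import Order.TTheory GRing.Theory Num.Theory.
Local Open Scope ring_scope.
Set Implicit Arguments. Unset Strict Implicit.
Section Gen.
Variable F : fieldType.

Lemma colker_unit k (A : 'M[F]_k) :
  (forall v : 'cV_k, A *m v = 0 -> v = 0) -> A \in unitmx.
Proof.
move=> H; rewrite -unitmx_tr -row_free_unit -kermx_eq0; apply/rowV0P => y.
rewrite sub_kermx => /eqP Hy.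
have : A *m y^T = 0 by rewrite -(trmxK A) -trmx_mul Hy trmx0.
by move/H => /(congr1 trmx); rewrite trmxK trmx0.
Qed.

Lemma unit_colker k (A : 'M[F]_k) :
  A \notin unitmx -> exists2 v : 'cV_k, v != 0 & A *m v = 0.
Proof.
rewrite -unitmx_tr -row_free_unit -kermx_eq0 => /rowV0Pn [y].
rewrite sub_kermx => /eqP Hy ynz.
exists y^T; first by rewrite trmx_eq0.
by rewrite -(trmxK A) -trmx_mul Hy trmx0.
Qed.

Lemma eigen_col k (g : 'M[F]_k) a :
  eigenvalue g a -> exists2 v : 'cV_k, v != 0 & g *m v = a *: v.
Proof.
rewrite /eigenvalue /eigenspace kermx_eq0 row_free_unit => /unit_colker [v vnz Hv].
exists v => //; move: Hv; rewrite mulmxBl mul_scalar_mx => /eqP.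
by rewrite subr_eq0 => /eqP.
Qed.

Lemma mx11_eq0 (a : 'M[F]_1) : a 0 0 = 0 -> a = 0.
Proof. by move=> H; apply/matrixP => i j; rewrite !ord1 H mxE. Qed.

Lemma mx11_mul (a b : 'M[F]_1) : (a *m b) 0 0 = a 0 0 * b 0 0.
Proof. by rewrite mxE big_ord1. Qed.

Variable n : nat.

Definition Omx (M : 'M[F]_n) (C0 : 'rV[F]_n) : 'M[F]_n :=
  \matrix_(i < n) (C0 *m M ^+ i).

Lemma Omx_mulv M C0 (v : 'cV_n) :
  (forall i : 'I_n, C0 *m M ^+ i *m v = 0) -> Omx M C0 *m v = 0.
Proof. by move=> H; apply/row_matrixP => i; rewrite row_mul rowK H row0. Qed.

Lemma rowv_Omx M C0 (x : 'rV_n) :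
  x *m Omx M C0 = \sum_i x 0 i *: (C0 *m M ^+ i).
Proof. by rewrite mulmx_sum_row; apply: eq_bigr => i _; rewrite rowK. Qed.

Lemma Omx_free_v M C0 (v : 'cV_n) : row_free (Omx M C0) ->
  (forall i : 'I_n, C0 *m M ^+ i *m v = 0) -> v = 0.
Proof.
move=> fr H; have := Omx_mulv H; rewrite row_free_unit in fr.
by move/(congr1 (mulmx (invmx (Omx M C0)))); rewrite mulKmx // mulmx0.
Qed.

Lemma Omx_free (M : 'M[F]_n) (E0 : 'cV[F]_n) (C0 : 'rV[F]_n) :
  (forall j, (j.+2 <= n)%N -> C0 *m M ^+ j *m E0 = 0) ->
  C0 *m M ^+ n.-1 *m E0 != 0 -> row_free (Omx M C0).
Proof.
move=> H0 H1; rewrite -kermx_eq0; apply/rowV0P => x; rewrite sub_kermx => /eqP Hx.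
have hm : forall (j : 'I_n) t, (x 0 j *: (C0 *m M ^+ j)) *m (M ^+ t *m E0)
    = x 0 j *: (C0 *m M ^+ (j + t) *m E0).
  by move=> j t; rewrite -scalemxAl exprD !mulmxA.
have key : forall t, (t < n)%N -> forall i : 'I_n, (i + t = n.-1)%N -> x 0 i = 0.
  elim/ltn_ind => t IH tn i hit.
  have Ht : x *m Omx M C0 *m (M ^+ t *m E0) = 0 by rewrite Hx mul0mx.
  rewrite rowv_Omx mulmx_suml (bigD1 i) //= big1 ?addr0 in Ht; last first.
    move=> j ji; rewrite hm.
    have [jt|jt] := ltnP (j + t) n.-1.
      by rewrite H0 ?scaler0 //; lia.
    have jt' : (j + t != n.-1)%N.
      by apply: contra ji => /eqP h; apply/eqP/val_inj => /=; lia.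
    have jn := ltn_ord j.
    by rewrite (IH (n.-1 - j)%N) ?scale0r //; lia.
  move: Ht; rewrite hm hit => /eqP; rewrite scaler_eq0 (negbTE H1) orbF.
  by move/eqP.
apply/rowP => i; rewrite mxE; have := ltn_ord i => hi.
by apply: (key (n.-1 - i)%N); lia.
Qed.
End Gen.
Section Gen2.
Variable F : fieldType.
Variable n : nat.

Lemma pow_eig (M : 'M[F]_n) (E0 v1 : 'cV[F]_n) (s : 'M[F]_1) z :
  M *m v1 = z *: v1 - E0 *m s ->
  forall i, M ^+ i *m v1 = z ^+ i *: v1
     - \sum_(j < i) z ^+ (i - j.+1) *: (M ^+ j *m E0 *m s).
Proof.
move=> Mv; elim=> [|i IH]; first by rewrite expr0 mul1mx scale1r big_ord0 subr0.
rewrite exprS -mulmxA IH mulmxBr mulmx_sumr big_ord_recl /= -scalemxAr Mv.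
rewrite scalerBr scalerA -exprSr subn1 /= expr0 mul1mx opprD addrA.
congr (_ - _ - _); apply: eq_bigr => j _.
by rewrite /bump leq0n add1n subSS -scalemxAr exprS !mulmxA.
Qed.

Lemma noZ (A0 M : 'M[F]_n) (E0 : 'cV[F]_n) (C0 : 'rV[F]_n) :
  (forall v : 'cV_n, C0 *m v = 0 -> M *m v = A0 *m v) ->
  row_free (Omx M C0) ->
  (forall j, (j.+2 <= n)%N -> C0 *m M ^+ j *m E0 = 0) -> E0 != 0 ->
  forall z, block_mx (A0 - z%:M) E0 C0 (0 : 'M_1) \in unitmx.
Proof.
move=> hM fr H0 E0nz z; apply: colker_unit => v Hv.
rewrite -(vsubmxK v) in Hv *.
move: (usubmx v) (dsubmx v) Hv => v1 s Hv.
rewrite mul_block_col mul0mx addr0 in Hv.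
move/eqP: Hv; rewrite col_mx_eq0 => /andP [/eqP H1 /eqP H2].
have Av : A0 *m v1 = z *: v1 - E0 *m s.
  move/eqP: H1; rewrite mulmxBl mul_scalar_mx addrAC subr_eq0 => /eqP <-.
  by rewrite addrK.
have Mv : M *m v1 = z *: v1 - E0 *m s by rewrite hM.
have Ov : forall i : 'I_n, C0 *m M ^+ i *m v1 = 0.
  move=> i; rewrite -mulmxA (pow_eig Mv) mulmxBr mulmx_sumr -scalemxAr H2 scaler0 sub0r.
  rewrite big1 ?oppr0 // => j _; rewrite -scalemxAr !mulmxA H0 ?mul0mx ?scaler0 //.
  by have := ltn_ord i; have := ltn_ord j; lia.
have v10 := Omx_free_v fr Ov.
rewrite v10 mulmx0 add0r in H1.
have s0 : s = 0.
  apply: mx11_eq0; move: H1; rewrite {1}[s]mx11_scalar mul_mx_scalar => /eqP.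
  by rewrite scaler_eq0 (negbTE E0nz) orbF => /eqP ->.
by rewrite v10 s0 col_mx0.
Qed.

Lemma nilpZ (M : 'M[F]_n) (E0 : 'cV[F]_n) (C0 : 'rV[F]_n) (L2 : 'M[F]_1) k z
   (v : 'cV[F]_(n + 1)) :
  row_free (Omx M C0) -> L2 != 0 ->
  (forall j, (block_mx M E0 (- (L2 *m C0)) 1 ^+ k) (rshift n ord0) j = 0) ->
  v != 0 -> block_mx M E0 (- (L2 *m C0)) 1 *m v = z *: v -> z = 0.
Proof.
set N := block_mx _ _ _ _ => fr L2nz Hk vnz Nv.
apply/eqP; apply: contraT => znz.
have Nkv : forall i, N ^+ i *m v = z ^+ i *: v.
  elim=> [|i IH]; first by rewrite expr0 mul1mx scale1r.
  by rewrite exprSr -mulmxA Nv -scalemxAr IH scalerA -exprS.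
have last0 : v (rshift n ord0) 0 = 0.
  have := congr1 (fun A : 'cV_(n+1) => A (rshift n ord0) 0) (Nkv k).
  rewrite /= mxE big1 => [|j _]; last by rewrite Hk mul0r.
  by rewrite mxE => /esym/eqP; rewrite mulf_eq0 expf_eq0 (negbTE znz) andbF /= => /eqP.
have d0 : dsubmx v = 0 by apply: mx11_eq0; rewrite mxE.
move: vnz Nv; rewrite -(vsubmxK v) d0; move: (usubmx v) => v1 vnz Nv.
rewrite /N mul_block_col !mulmx0 !addr0 scale_col_mx scaler0 in Nv.
case/eq_col_mx: Nv => Mv /eqP; rewrite mulNmx oppr_eq0 -mulmxA => /eqP LC.
have Cv : C0 *m v1 = 0.
  apply: mx11_eq0; apply/eqP; move: L2nz; apply: contraR => h.
  apply/eqP/mx11_eq0; have := congr1 (fun A : 'M_1 => A 0 0) LC.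
  rewrite /= mx11_mul [X in _ = X]mxE; move/eqP; rewrite mulf_eq0 (negbTE h) orbF => /eqP //.
have : v1 = 0.
  apply: (Omx_free_v fr) => i.
  have : M ^+ i *m v1 = z ^+ i *: v1.
    elim: (nat_of_ord i) => [|m IH]; first by rewrite expr0 mul1mx scale1r.
    by rewrite exprSr -mulmxA Mv -scalemxAr IH scalerA -exprS.
  by rewrite -mulmxA => ->; rewrite -scalemxAr Cv scaler0.
by move=> v10; move: vnz; rewrite v10 col_mx0 eqxx.
Qed.
End Gen2.
Section Closed.
Variable C : numClosedFieldType.

Lemma prod_constX (T : eqType) (r : seq T) (x : {poly C}) :
  \prod_(z <- r) x = x ^+ size r.
Proof. by elim: r => [|a r IH]; rewrite ?big_nil ?expr0 // big_cons IH exprS. Qed.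

Lemma nilp_of_eig k (B : 'M[C]_k) :
  (forall z, eigenvalue B z -> z = 0) -> B ^+ k = 0.
Proof.
case: k B => [|k] B H; first by apply/matrixP => [[]].
have [r Dp] := closed_field_poly_normal (char_poly B).
rewrite (monicP (char_poly_monic B)) scale1r in Dp.
have r0 : forall z, z \in r -> z = 0.
  by move=> z zr; apply: H; rewrite eigenvalue_root_char Dp root_prod_XsubC.
have Dp' : char_poly B = 'X ^+ (size r).
  rewrite Dp (eq_big_seq (fun _ => 'X)) ?prod_constX // => z /r0 ->.
  by rewrite subr0.
have szr : size r = k.+1.
  by have := size_char_poly B; rewrite Dp' size_polyXn => -[].
have := Cayley_Hamilton B; rewrite Dp' rmorphXn /= horner_mx_X szr //.
Qed.

Variable n : nat.

Lemma reldeg (A : 'M[C]_n) (E : 'cV[C]_n) (Cr : 'rV[C]_n) :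
  (forall z, block_mx (A - z%:M) E Cr (0 : 'M_1) \in unitmx) ->
  forall j, (j.+2 <= n)%N -> Cr *m A ^+ j *m E = 0.
Proof.
move=> Hu j0 j0n; apply/eqP; apply: contraT => hj0.
pose P j := (j.+2 <= n)%N && (Cr *m A ^+ j *m E != 0).
have exP : exists j, P j by exists j0; rewrite /P j0n hj0.
case: (ex_minnP exP) => p /andP [pn hp] pmin.
have hlt : forall j, (j < p)%N -> Cr *m A ^+ j *m E = 0.
  move=> j jp; apply/eqP; apply: contraT => hj.
  have : (p <= j)%N by apply: pmin; rewrite /P hj andbT; lia.
  by lia.
pose K := \matrix_(i < n, j < p.+1) (A ^+ j *m E) i 0.
have hK : forall m (W : 'M[C]_(m, n)) (j : 'I_p.+1),
    (W *m K) ^~ j =1 (W *m (A ^+ j *m E)) ^~ 0.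
  by move=> m W j a; rewrite !mxE; apply: eq_bigr => l _; rewrite mxE.
have hK0 : forall m (W : 'M[C]_(m, n)), W *m K = 0 ->
    forall j, (j <= p)%N -> W *m (A ^+ j *m E) = 0.
  move=> m W WK j jp; apply/matrixP => a b; rewrite ord1.
  by rewrite -(hK m W (Ordinal (jp : (j < p.+1)%N))) WK !mxE.
pose V0 := kermx K.
have rV : (0 < \rank V0)%N.
  by rewrite /V0 mxrank_ker; have := rank_leq_col K; lia.
pose h := (Cr *m A ^+ p *m E) 0 0.
have hnz : h != 0.
  apply: contra hp => /eqP h0; apply/eqP/mx11_eq0; exact: h0.
pose g := h^-1.
pose Fp := A - g *: (A ^+ p.+1 *m E *m Cr).
have hF : forall m (W : 'M[C]_(m, n)) j,
   W *m Fp *m (A ^+ j *m E) =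
   W *m (A ^+ j.+1 *m E) - g *: (W *m (A ^+ p.+1 *m E) *m (Cr *m A ^+ j *m E)).
  move=> m W j; rewrite /Fp mulmxBr mulmxBl -scalemxAr -scalemxAl !mulmxA.
  by congr (_ - _); rewrite exprS -!mulmxA.
have stab : (V0 *m Fp <= V0)%MS.
  rewrite /V0 sub_kermx; apply/eqP/matrixP => a j; rewrite (hK _ _ j) [RHS]mxE.
  have V0K := hK0 _ _ (mulmx_ker K).
  rewrite hF.
  have jp := ltn_ord j.
  have [jlt|jeq] := ltnP j p.
    by rewrite V0K // hlt // mulmx0 scaler0 subr0 mxE.
  have -> : nat_of_ord j = p by lia.
  rewrite [Cr *m _ *m _]mx11_scalar -/h mul_mx_scalar scalerA mulVf //.
  by rewrite scale1r subrr mxE.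
have stab' : (row_base V0 *m Fp <= row_base V0)%MS by rewrite stablemx_row_base.
have [a ea] := eigenvalue_closed (restrictmx V0 Fp) rV.
case/eigenvalueP: ea => x xa xnz.
have : (x <= eigenspace (restrictmx V0 Fp) a)%MS by apply/eigenspaceP.
rewrite sub_eigenspace_conjmx ?row_base_free // => /eigenspaceP yF.
set y := x *m row_base V0 in yF.
have ynz : y != 0 by rewrite /y mulmx_free_eq0 ?row_base_free.
have yV0 : (y <= V0)%MS.
  by rewrite /y (submx_trans (submxMl _ _)) // eq_row_base.
have yK : y *m K = 0 by apply/eqP; rewrite -sub_kermx.
have yE : y *m E = 0 by have := hK0 _ _ yK 0%N (leq0n _); rewrite expr0 mul1mx.
pose s : 'M[C]_1 := - g *: (y *m (A ^+ p.+1 *m E)).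
have : row_mx y s *m block_mx (A - a%:M) E Cr 0 = 0.
  rewrite mul_row_block mulmx0 addr0 yE; apply/eqP; rewrite row_mx_eq0 eqxx andbT.
  apply/eqP; rewrite mulmxBr mul_mx_scalar.
  move: yF; rewrite /Fp mulmxBr -scalemxAr => /eqP.
  rewrite subr_eq => /eqP ->.
  rewrite /s scaleNr mulNmx -scalemxAl !mulmxA.
  by rewrite addrAC addrK subrr.
move/(congr1 (mulmx^~ (invmx (block_mx (A - a%:M) E Cr 0)))).
rewrite mulmxK // mul0mx => /eqP; rewrite row_mx_eq0 => /andP [/eqP y0 _].
by rewrite y0 eqxx in ynz.
Qed.
End Closed.
Section Real.
Variable R : realType.

Lemma cmxX k (A : 'M[R]_k) j : cmx (A ^+ j) = cmx A ^+ j.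
Proof.
elim: j => [|j IH]; first by rewrite !expr0 /cmx map_mx1.
by rewrite !exprS -IH /cmx map_mxM.
Qed.
Lemma cmxM k m p (A : 'M[R]_(k,m)) (B : 'M[R]_(m,p)) : cmx (A *m B) = cmx A *m cmx B.
Proof. exact: map_mxM. Qed.
Lemma cmx_eq0 k m (A : 'M[R]_(k,m)) : (cmx A == 0) = (A == 0).
Proof. exact: map_mx_eq0. Qed.

Lemma mxpowS k (B : 'M[R]_k) j : B *m B ^+ j = B ^+ j.+1.
Proof. by rewrite exprS. Qed.

Variable n : nat.
Variables (A0 : 'M[R]_n) (B0 E0 : 'cV[R]_n) (C0 : 'rV[R]_n) (L : 'cV[R]_(n + 1)).

Local Notation N := (augA A0 E0 - L *m augC C0).

Definition ee : 'cV[R]_(n + 1) := col_mx 0 1.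
Definition lastc (v : 'cV[R]_(n + 1)) := v (rshift n ord0) 0.

Section Tr.
Variables (u f : nat -> R) (x0 : 'cV[R]_n) (Xh0 : 'cV[R]_(n + 1)).

Definition err k := col_mx (xtraj A0 B0 E0 u f x0 k) (f k)%:M
   - obs_traj A0 B0 E0 C0 L u f x0 Xh0 k.

Lemma fhat_err k : fhat A0 B0 E0 C0 L u f x0 Xh0 k = f k - lastc (err k).
Proof.
rewrite /lastc /err /fhat mxE col_mxEd mxE eqxx mulr1n.
by rewrite mxE opprD addrA subrr add0r opprK.
Qed.

Lemma err_step k : err k.+1 = N *m err k + (f k.+1 - f k) *: ee.
Proof.
rewrite /err /=.
set x := xtraj A0 B0 E0 u f x0 k.
set Xh := obs_traj A0 B0 E0 C0 L u f x0 Xh0 k.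
have hA : augA A0 E0 *m col_mx x (f k)%:M = col_mx (A0 *m x + f k *: E0) (f k)%:M.
  by rewrite /augA mul_block_col mul0mx add0r mul1mx mul_mx_scalar.
have hC : augC C0 *m col_mx x (f k)%:M = C0 *m x.
  by rewrite /augC mul_row_col mul0mx addr0.
have hX : col_mx (A0 *m x + u k *: B0 + f k *: E0) (f k.+1)%:M =
   augA A0 E0 *m col_mx x (f k)%:M + u k *: augB B0 + (f k.+1 - f k) *: ee.
  rewrite hA /augB /ee !scale_col_mx !add_col_mx !scaler0 !addr0 scalemx1.
  by congr col_mx; [rewrite addrAC | rewrite -raddfD /= addrC subrK].
rewrite hX -hC mulmxBl !mulmxBr -!mulmxA.
set a := augA A0 E0 *m col_mx x (f k)%:M.
set b := augA A0 E0 *m Xh.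
set c := L *m (augC C0 *m col_mx x (f k)%:M).
set d := L *m (augC C0 *m Xh).
set e := u k *: augB B0.
set g := (f k.+1 - f k) *: ee.
clearbody a b c d e g; apply/matrixP => i j; rewrite !mxE; ring.
Qed.

Lemma err_closed k : err k = N ^+ k *m err 0
   + \sum_(j < k) (f j.+1 - f j) *: (N ^+ (k - j.+1) *m ee).
Proof.
elim: k => [|k IH]; first by rewrite expr0 mul1mx big_ord0 addr0.
rewrite err_step IH mulmxDr mulmxA mxpowS mulmx_sumr big_ord_recr /= subnn.
rewrite expr0 mul1mx addrA; congr (_ + _ + _); apply: eq_bigr => j _.
rewrite -scalemxAr mulmxA mxpowS; congr (_ *: (_ ^+ _ *m _)).
by have := ltn_ord j; lia.
Qed.

Lemma lastc_err k : lastc (err k) = lastc (N ^+ k *m err 0)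
   + \sum_(j < k) (f j.+1 - f j) * lastc (N ^+ (k - j.+1) *m ee).
Proof.
rewrite err_closed /lastc mxE summxE; congr (_ + _).
by apply: eq_bigr => j _; rewrite mxE.
Qed.
End Tr.

Lemma N_block : N = block_mx (A0 - usubmx L *m C0) E0 (- (dsubmx L *m C0)) 1.
Proof.
rewrite -{1}(vsubmxK L) /augA /augC mul_col_row !mulmx0.
by rewrite opp_block_mx add_block_mx !subr0 sub0r.
Qed.

End Real.
Section Real2.
Variable R : realType.
Variable n : nat.

Definition Ssum (M : 'M[R]_n) (E0 : 'cV[R]_n) m := \sum_(j < m) M ^+ j *m E0.

Lemma SsumS M E0 m : Ssum M E0 m.+1 = M *m Ssum M E0 m + E0.
Proof.
rewrite /Ssum big_ord_recl expr0 mul1mx addrC mulmx_sumr; congr (_ + _).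
by apply: eq_bigr => j _; rewrite mulmxA mxpowS.
Qed.

Lemma Ssum_r M E0 m : Ssum M E0 m.+1 = Ssum M E0 m + M ^+ m *m E0.
Proof. by rewrite /Ssum big_ord_recr. Qed.

Lemma NpowS (M : 'M[R]_n) (E0 : 'cV[R]_n) (C0 : 'rV[R]_n) (L2 : 'M[R]_1) m X :
  block_mx M E0 (- (L2 *m C0)) 1 ^+ m *m ee R n = col_mx X 1 ->
  block_mx M E0 (- (L2 *m C0)) 1 ^+ m.+1 *m ee R n
    = col_mx (M *m X + E0) (1 - L2 *m (C0 *m X)).
Proof.
move=> H; rewrite -mxpowS -mulmxA H mul_block_col !mulmx1 mulNmx -mulmxA.
by congr col_mx; rewrite addrC.
Qed.

Lemma m11_sub (a b : 'M[R]_1) : (a - b) 0 0 = a 0 0 - b 0 0.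
Proof. by rewrite !mxE. Qed.
Lemma m11_1 : (1 : 'M[R]_1) 0 0 = 1.
Proof. by rewrite mxE. Qed.

Lemma cmxN_block (M : 'M[R]_n) (E0 : 'cV[R]_n) (C0 : 'rV[R]_n) (L2 : 'M[R]_1) :
  cmx (block_mx M E0 (- (L2 *m C0)) 1) = block_mx (cmx M) (cmx E0) (- (cmx L2 *m cmx C0)) 1.
Proof. by rewrite /cmx map_block_mx map_mxN map_mxM map_mx1. Qed.

Lemma lastc_col (X : 'cV[R]_n) (a : 'M[R]_1) : lastc (col_mx X a) = a 0 0.
Proof. by rewrite /lastc col_mxEd. Qed.

End Real2.

Unset Implicit Arguments.

Theorem theorem1 (R : realType) (n : nat) (hn : (1 <= n)%N)
  (A0 : 'M[R]_n) (B0 E0 : 'cV[R]_n) (C0 : 'rV[R]_n) (L : 'cV[R]_(n + 1)) :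
  (forall (u f : nat -> R) (x0 : 'cV[R]_n) (Xh0 : 'cV[R]_(n + 1)) (k : nat),
      (n.+1 < k)%N -> fhat A0 B0 E0 C0 L u f x0 Xh0 k = f (k - n.+1)%N)
  <->
  ((observable A0 C0 /\ no_invariant_zeros A0 E0 C0) /\
   (forall z : complex R,
      eigenvalue (cmx (augA A0 E0 - L *m augC C0)) z -> z = 0)).
Proof.
have NB := N_block A0 E0 C0 L.
set N := augA A0 E0 - L *m augC C0 in NB *.
set L1 := usubmx L in NB; set L2 := dsubmx L in NB.
set M := A0 - L1 *m C0 in NB.
pose S := Ssum M E0.
split.
- move=> P.
  have F1 : forall k, (n.+1 < k)%N -> forall j, (N ^+ k) (rshift n ord0) j = 0.
    move=> k hk j.
    have := P (fun _ => 0) (fun _ => 0) 0 (- delta_mx j 0) k hk.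
    rewrite fhat_err lastc_err big1 => [|i _]; last by rewrite subrr mul0r.
    have -> : err A0 B0 E0 C0 L (fun _ => 0) (fun _ => 0) 0 (- delta_mx j 0) 0
        = delta_mx j 0.
      by rewrite /err /= raddf0 col_mx0 sub0r opprK.
    rewrite addr0 sub0r => /eqP; rewrite oppr_eq0 => /eqP.
    by rewrite /lastc -colE mxE.
  have F2 : forall m, lastc (N ^+ m *m ee R n) = if (m <= n)%N then 1 else 0.
    move=> m.
    pose fs := fun j : nat => if (n.+1 < j)%N then (1 : R) else 0.
    have hk : (n.+1 < (m + n.+2)%N)%N by lia.
    have := P (fun _ => 0) fs 0 0 (m + n.+2) hk.
    rewrite fhat_err lastc_err.
    have -> : err A0 B0 E0 C0 L (fun _ => 0) fs 0 0 0 = 0.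
      by rewrite /err /= /fs raddf0 col_mx0 subr0.
    rewrite mulmx0 {1}/lastc mxE add0r.
    rewrite (bigD1 (Ordinal hk)) //= big1 ?addr0 => [|i hi]; last first.
      have hi' : (nat_of_ord i != n.+1) by apply: contra hi => /eqP h; apply/eqP/val_inj.
      rewrite /fs; have [h|h] := ltnP n.+1 i.
        have h2 : (n.+1 < i.+1)%N by lia.
        by rewrite ?h ?h2 subrr mul0r.
      have h2 : (n.+1 < i.+1)%N = false by apply/negbTE; rewrite -leqNgt; lia.
      have h3 : (n.+1 < i)%N = false by apply/negbTE; rewrite -leqNgt; lia.
      by rewrite ?h2 ?h3 subrr mul0r.
    rewrite /fs ltnSn ltnn subr0 mul1r ifT; last by lia.
    have -> : (m + n.+2 - n.+2 = m)%N by lia.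
    have -> : (m + n.+2 - n.+1 = m.+1)%N by lia.
    rewrite -/N; move=> h; have := congr1 (fun x => 1 - x) h.
    rewrite /= opprB addrC subrK => ->.
    have [hmn|hmn] := leqP m n.
      have e1 : (n.+1 < m.+1)%N = false by apply/negbTE; rewrite -leqNgt; lia.
      by rewrite e1 subr0.
    have e1 : (n.+1 < m.+1)%N = true by lia.
    have e2 : (m <= n)%N = false by apply/negbTE; rewrite -ltnNge; lia.
    by rewrite e1 subrr.
  have key : forall m, N ^+ m *m ee R n = col_mx (S m) 1 ->
      N ^+ m.+1 *m ee R n = col_mx (S m.+1) (1 - L2 *m (C0 *m S m)) /\
      1 - (L2 *m (C0 *m S m)) 0 0 = if (m.+1 <= n)%N then 1 else 0.
    move=> m h.
    have h' : N ^+ m.+1 *m ee R n = col_mx (S m.+1) (1 - L2 *m (C0 *m S m)).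
      have hb : block_mx M E0 (- (L2 *m C0)) 1 ^+ m *m ee R n = col_mx (S m) 1.
        by rewrite -NB.
      by rewrite NB (NpowS hb) /S SsumS.
    by split => //; rewrite -F2 h' lastc_col m11_sub m11_1.
  have G : forall m, (m <= n)%N -> N ^+ m *m ee R n = col_mx (S m) 1.
    elim=> [|m IH] hm; first by rewrite expr0 mul1mx /S /Ssum big_ord0.
    have [h1 h2] := key m (IH (ltnW hm)).
    rewrite hm in h2; rewrite h1; move/eqP: h2; rewrite subr_eq addrC -subr_eq subrr eq_sym.
    by move=> /eqP /mx11_eq0 ->; rewrite subr0.
  have LS : forall m, (m <= n)%N ->
      (L2 *m (C0 *m S m)) 0 0 = if (m < n)%N then 0 else 1.
    move=> m hm; have [_ h2] := key m (G m hm).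
    have := congr1 (fun x => 1 - x) h2; rewrite /= opprB addrC subrK => ->.
    by case: ifP; rewrite ?subr0 ?subrr.
  pose l2 := L2 0 0.
  pose sg m := (C0 *m S m) 0 0.
  have LS' : forall m, (m <= n)%N -> l2 * sg m = if (m < n)%N then 0 else 1.
    by move=> m hm; rewrite -LS // mx11_mul.
  have l2nz : l2 != 0.
    by apply/eqP => h; have := LS' n (leqnn n); rewrite h mul0r ltnn => /eqP; rewrite eq_sym oner_eq0.
  have sg0 : forall m, (m < n)%N -> sg m = 0.
    move=> m hm; have := LS' m (ltnW hm); rewrite hm => /eqP.
    by rewrite mulf_eq0 (negbTE l2nz) /= => /eqP.
  have sgn : sg n = l2^-1.
    have := LS' n (leqnn n); rewrite ltnn => h.
    by apply: (mulfI l2nz); rewrite h mulfV.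
  have hdiff : forall j, (C0 *m M ^+ j *m E0) 0 0 = sg j.+1 - sg j.
    move=> j; rewrite /sg /S Ssum_r mulmxDr mulmxA [X in _ = X - _]mxE.
    by rewrite [X in _ = X - _]addrC addrK.
  have H0 : forall j, (j.+2 <= n)%N -> C0 *m M ^+ j *m E0 = 0.
    move=> j hj; apply: mx11_eq0; rewrite hdiff !sg0 ?subrr //; lia.
  have H1 : C0 *m M ^+ n.-1 *m E0 != 0.
    apply/eqP => /(congr1 (fun X : 'M_1 => X 0 0)) /=; rewrite hdiff prednK //.
    rewrite sgn sg0 ?subr0; last by lia.
    by rewrite mxE => /eqP; rewrite invr_eq0 (negbTE l2nz).
  have frR : row_free (Omx M C0) := Omx_free H0 H1.
  have H0c : forall j, (j.+2 <= n)%N -> cmx C0 *m cmx M ^+ j *m cmx E0 = 0.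
    by move=> j hj; apply/eqP; rewrite -cmxX -!cmxM cmx_eq0 H0.
  have H1c : cmx C0 *m cmx M ^+ n.-1 *m cmx E0 != 0.
    by rewrite -cmxX -!cmxM cmx_eq0.
  have frC : row_free (Omx (cmx M) (cmx C0)) := Omx_free H0c H1c.
  split; [split|].
  + rewrite /observable; apply: mxrank_unit; apply: colker_unit => v Ov.
    have hC : forall i : 'I_n, C0 *m A0 ^+ i *m v = 0.
      by move=> i; have := congr1 (row i) Ov; rewrite row_mul rowK row0.
    have hMv : forall i, (i < n)%N -> M ^+ i *m v = A0 ^+ i *m v.
      elim=> [|i IH] hi; first by rewrite !expr0.
      rewrite -!mxpowS -!mulmxA IH; last by lia.
      have hc : C0 *m (A0 ^+ i *m v) = 0.
        by rewrite mulmxA; exact: (hC (Ordinal (ltnW hi))).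
      by rewrite /M mulmxBl -!mulmxA hc mulmx0 subr0.
    by apply: (Omx_free_v frR) => i; rewrite -mulmxA hMv // mulmxA hC.
  + move=> z; rewrite /rosenbrock; apply: mxrank_unit.
    apply: (@noZ _ _ _ (cmx M)) => //.
    * by move=> v Cv; rewrite /M /cmx map_mxB map_mxM mulmxBl -mulmxA Cv mulmx0 subr0.
    * rewrite cmx_eq0; apply: contra H1 => /eqP ->; by rewrite mulmx0.
  + move=> z /eigen_col [v vnz Nv].
    apply: (@nilpZ _ _ (cmx M) (cmx E0) (cmx C0) (cmx L2) n.+2 z v) => //.
    * rewrite cmx_eq0; apply: contra l2nz => /eqP h; by rewrite /l2 h mxE.
    * move=> j; rewrite -cmxN_block -NB -cmxX mxE F1 //.
    * by rewrite -cmxN_block -NB.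
- move=> [[obs nz] eig] u f x0 Xh0 k hk.
  have Nnil : N ^+ (n + 1) = 0.
    by have := nilp_of_eig eig; rewrite -cmxX => /eqP; rewrite cmx_eq0 => /eqP.
  have Nk0 : forall m, (n < m)%N -> N ^+ m = 0.
    have Nnil' : N ^+ n.+1 = 0 by rewrite -Nnil; congr (_ ^+ _); rewrite addn1.
    by move=> m hm; rewrite -(subnKC hm) exprD Nnil' mul0r.
  have hA : forall j, (j.+2 <= n)%N -> C0 *m A0 ^+ j *m E0 = 0.
    move=> j hj; apply/eqP; rewrite -cmx_eq0 cmxM cmxM cmxX.
    apply/eqP; apply: reldeg => //.
    by move=> z; have := nz z; rewrite /rosenbrock -row_full_unit /row_full => ->.
  have hME : forall i, (i < n)%N -> M ^+ i *m E0 = A0 ^+ i *m E0.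
    elim=> [|i IH] hi; first by rewrite !expr0.
    rewrite -!mxpowS -!mulmxA IH; last by lia.
    have hc : C0 *m (A0 ^+ i *m E0) = 0 by rewrite mulmxA hA.
    by rewrite /M mulmxBl -!mulmxA hc mulmx0 subr0.
  have CS : forall m, (m < n)%N -> C0 *m S m = 0.
    move=> m hm; rewrite /S /Ssum mulmx_sumr big1 // => j _.
    rewrite hME; last by have := ltn_ord j; lia.
    by rewrite mulmxA hA //; have := ltn_ord j; lia.
  have G : forall m, (m <= n)%N -> N ^+ m *m ee R n = col_mx (S m) 1.
    elim=> [|m IH] hm; first by rewrite expr0 mul1mx /S /Ssum big_ord0.
    have hb : block_mx M E0 (- (L2 *m C0)) 1 ^+ m *m ee R n = col_mx (S m) 1.
      by rewrite -NB IH // ltnW.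
    by rewrite NB (NpowS hb) /S -SsumS -/(S m) CS // mulmx0 subr0.
  have cval : forall m, lastc (N ^+ m *m ee R n) = if (m <= n)%N then 1 else 0.
    move=> m; case: ifP => hm; first by rewrite G // lastc_col m11_1.
    by rewrite Nk0 ?mul0mx /lastc ?mxE //; move/negbT: hm; rewrite -ltnNge.
  rewrite fhat_err lastc_err Nk0 ?mul0mx; last by lia.
  rewrite {1}/lastc mxE add0r.
  under eq_bigr do rewrite cval.
  rewrite -(big_mkord xpredT (fun j => (f j.+1 - f j) * (if (k - j.+1 <= n)%N then 1 else 0))).
  rewrite (@big_cat_nat _ _ _ (k - n.+1)) /=; [|by []|by lia].
  rewrite big_nat_cond big1 ?add0r => [|j /andP [/andP [_ hj] _]]; last first.
    by rewrite ifF ?mulr0 //; apply/negbTE; rewrite -ltnNge; lia.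
  rewrite big_nat_cond (eq_bigr (fun j => f j.+1 - f j)) => [|j /andP [/andP [h1 h2] _]]; last first.
    by rewrite ifT ?mulr1 //; lia.
  rewrite -big_nat_cond telescope_sumr; last by lia.
  by rewrite opprB addrC subrK.
Qed.
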